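(* For every detector $\hat\theta$, every $p>1$, and every measurable $\zeta_2:\mathcal{X}\to(0,\infty)$ with ${\rm E}[\zeta_2(\mathbf{x})]<\infty$ and ${\rm E}\big[\zeta_2(\mathbf{x})^{\frac{1}{1-p}}\sum_{i=1}^M P(\theta_i|\mathbf{x})^{\frac{p}{p-1}}\big]<\infty$, $$P_e\geq 1-{\rm E}^{\frac1p}\big[\zeta_2(\mathbf{x})\big]\;{\rm E}^{\frac{p-1}{p}}\Big[\zeta_2(\mathbf{x})^{\frac{1}{1-p}}\sum_{i=1}^M P(\theta_i|\mathbf{x})^{\frac{p}{p-1}}\Big].$$
   Context: $M$-ary hypothesis testing: the true hypothesis $\theta$ is a random variable with values in $\{\theta_1,\ldots,\theta_M\}$, $\mathbf{x}$ is a random observation in a measurable space $\mathcal{X}$, and $P(\theta_i|\mathbf{x})$ is the posterior probability of $\theta_i$ given $\mathbf{x}$, assumed to satisfy $P(\theta_i|\mathbf{x})>0$ for all $\mathbf{x}$, $i$. A detector is a measurable map $\hat\theta:\mathcal{X}\to\{\theta_1,\ldots,\theta_M\}$, and its probability of error is $P_e=\Pr(\hat\theta(\mathbf{x})\neq\theta)$. ${\rm E}^a[Y]$ denotes $({\rm E}[Y])^a$. *)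

(* Defs.v *)
From mathcomp Require Import all_boot all_order all_algebra.
From mathcomp Require Import all_classical all_reals all_analysis.
Set Implicit Arguments. Unset Strict Implicit. Unset Printing Implicit Defensive.
Import Order.TTheory GRing.Theory Num.Theory.
Local Open Scope classical_set_scope.
Local Open Scope ring_scope.

(* A map into the finite hypothesis index set 'I_M is measurable for the
   discrete sigma-algebra on 'I_M iff every fibre is measurable. *)
Definition meas_index {d} {T : measurableType d} {M : nat} (f : T -> 'I_M) :=
  forall i : 'I_M, measurable (f @^-1` [set i]).

(* post is a (version of the) posterior P(theta_i | x): for every i it is a
   measurable function of x and, for every measurable A,
   Pr(theta = theta_i, x \in A) = E[ post i (x) ; x \in A ]. *)
Definition is_posterior {d d'} {Omega : measurableType d} {R : realType}
  {X : measurableType d'} {M : nat} (P : probability Omega R)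
  (theta : Omega -> 'I_M) (x : Omega -> X) (post : 'I_M -> X -> R) :=
  (forall i, measurable_fun setT (post i)) /\
  forall (i : 'I_M) (A : set X), measurable A ->
    P ([set w | theta w = i] `&` (x @^-1` A)) =
    (\int[P]_(w in x @^-1` A) (post i (x w))%:E)%E.

(* Main.v *)
Require Import Defs.
From mathcomp Require Import all_boot all_order all_algebra.
From mathcomp Require Import all_classical all_reals all_analysis.
From mathcomp Require Import ring lra.
Import Order.TTheory GRing.Theory Num.Theory measurable_realfun.
Local Open Scope classical_set_scope.
Local Open Scope ring_scope.

Lemma bigsetU_ordP (T : Type) (n : nat) (F : 'I_n -> set T) (w : T) :
  (\big[setU/set0]_(i < n) F i) w <-> exists i, F i w.
Proof.
split; last first.
  by case=> i Hi; rewrite (bigD1 i) //=; left.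
pose Q (A : set T) := A w -> exists i, F i w.
apply: (@big_ind _ Q) => //.
- by move=> A B HA HB [/HA|/HB].
- by move=> i _ Hi; exists i.
Qed.

Lemma Pc_eq (R : realType) (d d' : measure_display)
  (Omega : measurableType d) (X : measurableType d') (P : probability Omega R)
  (M : nat) (theta : Omega -> 'I_M) (x : Omega -> X) (post : 'I_M -> X -> R)
  (Htheta : meas_index theta) (Hx : measurable_fun setT x)
  (Hpost : is_posterior P theta x post)
  (Hpos : forall (i : 'I_M) (y : X), 0 < post i y)
  (thetahat : X -> 'I_M) (Hdet : meas_index thetahat) :
  exists h : Omega -> R, [/\ forall w, h w = post (thetahat (x w)) (x w),
      measurable_fun setT h,
      measurable [set w | thetahat (x w) == theta w] &
      P [set w | thetahat (x w) == theta w] = (\int[P]_w (h w)%:E)%E].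
Proof.
pose G i := x @^-1` (thetahat @^-1` [set i]).
pose h w := \sum_(i < M) post i (x w) * \1_(G i) w.
exists h.
have mG i : measurable (G i).
  by have := Hx measurableT _ (Hdet i); rewrite setTI.
have mpx i : measurable_fun setT (fun w => post i (x w)).
  exact: measurableT_comp (Hpost.1 i) Hx.
have hE w : h w = post (thetahat (x w)) (x w).
  rewrite /h (bigD1 (thetahat (x w))) //= big1 ?addr0.
    by rewrite indicE mem_set ?mulr1.
  move=> i hi; rewrite indicE memNset ?mulr0 //.
  by rewrite /G /= => hh; move: hi; rewrite hh eqxx.
have mh : measurable_fun setT h.
  apply: measurable_sum => i; apply: measurable_funM => //;
  by apply: (measurable_indic (mG i)).
pose F i := [set w | theta w = i] `&` G i.
have mF i : measurable (F i) by apply: measurableI => //; exact: Htheta.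
have Eset : [set w | thetahat (x w) == theta w] = \big[setU/set0]_(i < M) F i.
  apply/seteqP; split => w /=.
    move/eqP => e; apply/bigsetU_ordP.
    exists (theta w) => //=; split => //; rewrite /G /= e //.
  move=> /bigsetU_ordP [i [/= e1 e2]]; apply/eqP.
  by rewrite e1; exact: e2.
have mE : measurable [set w | thetahat (x w) == theta w].
  by rewrite Eset; exact: bigsetU_measurable.
split => //.
rewrite Eset measure_bigsetU_ord //; last first.
  move=> i j _ _ [w [[/= e1 _] [/= e2 _]]]; by rewrite -e1 -e2.
rewrite /F /G.
transitivity (\sum_(i < M) \int[P]_w ((fun w => (post i (x w))%:E) \_ (G i) w))%E.
  apply: eq_bigr => i _; rewrite -integral_mkcond; exact: (Hpost.2 i _ (Hdet i)).
rewrite -ge0_integral_sum //; last first.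
  move=> i w _; rewrite patchE; case: ifP => _ //.
  by rewrite lee_fin ltW.
  move=> i; apply/(measurable_restrictT _ (mG i)).1 => //.
  apply/measurable_EFinP; exact: measurable_funS (mpx i).
apply: eq_integral => w _; rewrite /h -sumEFin; apply: eq_bigr => i _.
rewrite patchE indicE; case: ifP => /= H.
  by rewrite mulr1.
by rewrite mulr0.
Qed.

Theorem mainTheorem4 (R : realType) (d d' : measure_display)
  (Omega : measurableType d) (X : measurableType d') (P : probability Omega R)
  (M : nat) (theta : Omega -> 'I_M) (x : Omega -> X) (post : 'I_M -> X -> R)
  (Htheta : meas_index theta) (Hx : measurable_fun setT x)
  (Hpost : is_posterior P theta x post)
  (Hpos : forall (i : 'I_M) (y : X), 0 < post i y)
  (thetahat : X -> 'I_M) (Hdet : meas_index thetahat)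
  (p : R) (Hp : 1 < p)
  (zeta2 : X -> R) (Hzm : measurable_fun setT zeta2)
  (Hzpos : forall y, 0 < zeta2 y)
  (Hz1 : (\int[P]_w (zeta2 (x w))%:E < +oo)%E)
  (Hz2 : (\int[P]_w (zeta2 (x w) `^ (1 / (1 - p)) *
            \sum_(i < M) post i (x w) `^ (p / (p - 1)))%:E < +oo)%E) :
  ((1 - fine (\int[P]_w (zeta2 (x w))%:E) `^ (1 / p) *
        fine (\int[P]_w (zeta2 (x w) `^ (1 / (1 - p)) *
            \sum_(i < M) post i (x w) `^ (p / (p - 1)))%:E) `^ ((p - 1) / p))%:E
   <= P [set w | thetahat (x w) != theta w])%E.
Proof.
have [h [hE mh mE Pc]] := @Pc_eq _ _ _ _ _ _ _ _ _ _ Htheta Hx Hpost Hpos _ Hdet.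
set A := (\int[P]_w (zeta2 (x w))%:E)%E in Hz1 *.
set S := fun w => \sum_(i < M) post i (x w) `^ (p / (p - 1)).
set B := (\int[P]_w (zeta2 (x w) `^ (1 / (1 - p)) * S w)%:E)%E in Hz2 *.
have p0 : 0 < p by apply: lt_trans Hp.
have p10 : 0 < p - 1 by rewrite subr_gt0.
set q := p / (p - 1).
have q0 : 0 < q by rewrite divr_gt0.
have pq : p^-1 + q^-1 = 1.
  rewrite /q invf_div; field; rewrite gt_eqF //.
have h0 w : 0 <= h w by rewrite hE ltW.
have mzx : measurable_fun setT (fun w => zeta2 (x w)) := measurableT_comp Hzm Hx.
pose f w := zeta2 (x w) `^ p^-1.
pose g w := zeta2 (x w) `^ (- p^-1) * h w.
have mf : measurable_fun setT f := measurableT_comp (measurable_powR _) mzx.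
have mg : measurable_fun setT g.
  apply: measurable_funM => //; exact: measurableT_comp (measurable_powR _) mzx.
have H := hoelder P mf mg p0 q0 pq.
have fg w : f w * g w = h w.
  rewrite /f /g mulrA -powRD; last by rewrite (gt_eqF (Hzpos _)) implybT.
  by rewrite addrN powRr0 mul1r.
have e1 : Lnorm P 1 (EFin \o (f \* g)) = P [set w | thetahat (x w) == theta w].
  rewrite Pc Lnorm1; apply: eq_integral => w _ /=.
  by rewrite fg ger0_norm.
have e2 : Lnorm P p%:E (EFin \o f) = (A `^ p^-1)%E.
  rewrite unlock /=; congr (_ `^ _)%E; apply: eq_integral => w _ /=.
  rewrite ger0_norm ?powR_ge0 // -powRrM mulVf ?gt_eqF //.
  by rewrite powRr1 // ltW.
have e3 : (Lnorm P q%:E (EFin \o g) <= B `^ q^-1)%E.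
  rewrite unlock /=; apply: gt0_ler_poweR.
  - by rewrite invr_ge0 ltW.
  - rewrite in_itv /= leey andbT; apply: integral_ge0 => w _.
    by rewrite lee_fin powR_ge0.
  - rewrite in_itv /= leey andbT; apply: integral_ge0 => w _.
    by rewrite lee_fin mulr_ge0 ?powR_ge0 // sumr_ge0 // => i _; rewrite powR_ge0.
  apply: ge0_le_integral => //.
  - apply/measurable_EFinP; apply: measurableT_comp (measurable_powR _) _.
    exact: measurableT_comp (@normr_measurable _ _) mg.
  - apply/measurable_EFinP; apply: measurable_funM.
      exact: measurableT_comp (measurable_powR _) mzx.
    apply: measurable_sum => i; apply: measurableT_comp (measurable_powR _) _.
    exact: measurableT_comp (Hpost.1 i) Hx.
  move=> w _ /=.
  have g0 : 0 <= g w by rewrite mulr_ge0 ?powR_ge0.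
  rewrite lee_fin ger0_norm //.
  rewrite /g powRM ?powR_ge0 // -powRrM.
  have -> : - p^-1 * q = 1 / (1 - p).
    rewrite /q; field; by rewrite subr_eq0 (lt_eqF Hp) (gt_eqF p10) (gt_eqF p0).
  rewrite ler_wpM2l ?powR_ge0 // hE /S /q (bigD1 (thetahat (x w))) //=.
  by rewrite lerDl sumr_ge0 // => i _; rewrite powR_ge0.
have Afin : A \is a fin_num.
  by rewrite ge0_fin_numE // integral_ge0 // => w _; rewrite lee_fin ltW.
have Bfin : B \is a fin_num.
  rewrite ge0_fin_numE // integral_ge0 // => w _.
  by rewrite lee_fin mulr_ge0 ?powR_ge0 // sumr_ge0 // => i _; rewrite powR_ge0.
rewrite e1 e2 in H.
have H2 : (P [set w | thetahat (x w) == theta w] <= A `^ p^-1 * B `^ q^-1)%E.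
  apply: le_trans H _; apply: lee_pmul => //; first exact: poweR_ge0.
  exact: Lnorm_ge0.
rewrite -(fineK Afin) -(fineK Bfin) !poweR_EFin -EFinM in H2.
have -> : [set w | thetahat (x w) != theta w] = ~` [set w | thetahat (x w) == theta w].
  by apply/seteqP; split => w /=; case: eqP.
rewrite probability_setC //.
have Pfin : P [set w | thetahat (x w) == theta w] \is a fin_num.
  rewrite ge0_fin_numE //; apply: le_lt_trans (probability_le1 P mE) _.
  exact: ltry.
rewrite -(fineK Pfin) in H2 *; rewrite lee_fin in H2.
rewrite -EFinB lee_fin div1r; rewrite /q invf_div in H2.
lra.
Qed.
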